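(* Let $\varepsilon\in(0,1)$, $\rho\in\mathcal{D}$, and $X$ a Hermitian operator with $\operatorname{tr}[X]=1$. Then $D_{\min,\varepsilon}(\rho\|X)=-\log(1-\varepsilon)$ if and only if $\rho=X$.
   Context: $\mathcal{D}$ is the set of density operators on a finite-dimensional Hilbert space. For $\rho\in\mathcal{D}$ and Hermitian $X$, $D_{\min,\varepsilon}(\rho\|X)=-\log\alpha$ where $\alpha=\min\{\operatorname{tr}[EX]:0\le E\le I,\ \operatorname{tr}[\rho(I-E)]\le\varepsilon\}$, with the convention that $D_{\min,\varepsilon}(\rho\|X)=+\infty$ if $\alpha\le0$. *)

(* Defs.v *)
From mathcomp Require Import all_boot all_order all_algebra.
From mathcomp Require Import all_classical all_reals all_analysis.
From mathcomp.real_closed Require Import complex.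

Set Implicit Arguments.
Unset Strict Implicit.
Unset Printing Implicit Defensive.

Import Order.TTheory GRing.Theory Num.Theory.
Local Open Scope ring_scope.
Local Open Scope classical_set_scope.
Local Open Scope sesquilinear_scope.
Local Open Scope complex_scope.

Section Defs.
Variables (R : realType) (n : nat).
Local Notation C := R[i].

(* positive semidefinite: Hermitian and <v, A v> >= 0 for all vectors v
   (the order on R[i] is the partial order: z <= w iff w - z is real >= 0) *)
Definition psdmx (A : 'M[C]_n) : Prop :=
  A \is hermsymmx /\ forall v : 'cV[C]_n, 0 <= (v ^t* *m A *m v) 0 0.

Definition loewner_le (A B : 'M[C]_n) : Prop := psdmx (B - A).

Definition density (rho : 'M[C]_n) : Prop := psdmx rho /\ \tr rho = 1.

Definition feasible_test (eps : R) (rho E : 'M[C]_n) : Prop :=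
  [/\ loewner_le 0 E, loewner_le E 1%:M & \tr (rho *m (1%:M - E)) <= eps%:C].

(* alpha = min { tr[E X] : E feasible }  (the min exists by compactness;
   it is expressed as an infimum; tr[E X] is real for Hermitian E, X) *)
Definition Dmin_alpha (eps : R) (rho X : 'M[C]_n) : R :=
  inf [set complex.Re (\tr (E *m X)) | E in [set E | feasible_test eps rho E]].

Definition Dmin (eps : R) (rho X : 'M[C]_n) : \bar R :=
  let a := Dmin_alpha eps rho X in
  if 0 < a then ((- ln a)%:E)%E else (+oo)%E.

End Defs.

(* Main.v *)
Require Import Defs.
From mathcomp Require Import all_boot all_order all_algebra.
From mathcomp Require Import all_classical all_reals all_analysis.
From mathcomp.real_closed Require Import complex.
From mathcomp Require Import lra.
Set Implicit Arguments.
Unset Strict Implicit.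
Import Order.TTheory GRing.Theory Num.Theory.
Local Open Scope ring_scope.
Local Open Scope sesquilinear_scope.
Local Open Scope complex_scope.

Section Aux.
Variables (R : realType) (n : nat).
Local Notation C := R[i].

Definition herm (A : 'M[C]_n) := forall i j, A i j = (A j i)^*%R.

Lemma hermP (A : 'M[C]_n) : A \is hermsymmx <-> herm A.
Proof.
split.
- move/is_hermitianmxP => hA i j.
  by rewrite {1}hA expr0 scale1r !mxE.
- move=> hA; apply/is_hermitianmxP; apply/matrixP => i j.
  by rewrite expr0 scale1r !mxE hA.
Qed.

Definition qf (A : 'M[C]_n) (v : 'cV[C]_n) := (v ^t* *m A *m v) 0 0.

Lemma qfE A v : qf A v = \sum_j \sum_i (v i 0)^*%R * A i j * v j 0.
Proof.
rewrite /qf mxE; apply: eq_bigr => j _; rewrite mxE big_distrl /=.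
by apply: eq_bigr => i _; rewrite !mxE.
Qed.

Lemma qfD A B v : qf (A + B) v = qf A v + qf B v.
Proof. by rewrite /qf mulmxDr mulmxDl mxE. Qed.

Lemma qfZ c A v : qf (c *: A) v = c * qf A v.
Proof. by rewrite /qf -scalemxAr -scalemxAl mxE. Qed.

Lemma qf1E v : qf 1%:M v = \sum_i `|v i 0| ^+ 2.
Proof.
rewrite /qf mulmx1 mxE. apply eq_bigr => i _.
by rewrite !mxE normCKC.
Qed.

Lemma qf1_ge0 v : 0 <= qf 1%:M v.
Proof. by rewrite qf1E; apply: sumr_ge0 => i _; rewrite exprn_ge0. Qed.

Lemma qf_scalar c v : qf c%:M v = c * qf 1%:M v.
Proof. by rewrite -qfZ scalemx1. Qed.

Lemma qf_real H v : herm H -> qf H v \is Num.real.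
Proof.
move=> hH; apply/CrealP; rewrite qfE rmorph_sum /=.
rewrite exchange_big /=; apply: eq_bigr => j _.
rewrite rmorph_sum; apply: eq_bigr => i _ /=.
rewrite !rmorphM /= conjCK -hH.
by rewrite mulrC [v i 0 * _]mulrC mulrA.
Qed.

Lemma norm_le_S (v : 'cV[C]_n) (i j : 'I_n) : `|v i 0| * `|v j 0| <= qf 1%:M v.
Proof.
have hk k : `|v k 0| ^+ 2 <= qf 1%:M v.
  rewrite qf1E (bigD1 k) //= lerDl; apply: sumr_ge0 => l _; exact: exprn_ge0.
have /orP [h|h] := real_leVge (normr_real (v i 0)) (normr_real (v j 0)).
- apply: le_trans (hk j); rewrite expr2; apply: ler_wpM2r => //.
- apply: le_trans (hk i); rewrite expr2; apply: ler_wpM2l => //.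
Qed.

Definition msum (H : 'M[C]_n) := \sum_j \sum_i `|H i j|.

Lemma qf_bound H v : `|qf H v| <= msum H * qf 1%:M v.
Proof.
rewrite qfE /msum big_distrl /=.
apply: le_trans (ler_norm_sum _ _ _) _; apply: ler_sum => j _.
rewrite big_distrl /=.
apply: le_trans (ler_norm_sum _ _ _) _; apply: ler_sum => i _.
rewrite !normrM norm_conjC [X in X <= _]mulrC mulrA.
rewrite [`|H i j| * _]mulrC -mulrA mulrA [X in _ <= X]mulrC.
rewrite [`|H i j| * qf _ _]mulrC; apply: ler_wpM2r => //; rewrite mulrC; exact: norm_le_S.
Qed.


Lemma herm_D A B : herm A -> herm B -> herm (A + B).
Proof. by move=> hA hB i j; rewrite !mxE hA hB rmorphD. Qed.

Lemma herm_N A : herm A -> herm (- A).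
Proof. by move=> hA i j; rewrite !mxE hA rmorphN. Qed.

Lemma herm_Z (d : C) A : d \is Num.real -> herm A -> herm (d *: A).
Proof. by move=> hd hA i j; rewrite !mxE rmorphM /= (conj_Creal hd) -hA. Qed.

Lemma herm_scalar (a : C) : a \is Num.real -> herm a%:M.
Proof.
move=> ha i j; rewrite !mxE rmorphMn /= conj_Creal // eq_sym; done.
Qed.

Lemma psd_comb H (a d : C) : herm H -> 0 <= a -> d \is Num.real ->
  `|d| * msum H <= a -> psdmx (a%:M + d *: H).
Proof.
move=> hH ha hd hdM; split.
  apply/hermP; apply: herm_D; first by apply: herm_scalar; exact: ger0_real.
  exact: herm_Z.
move=> v; rewrite -/(qf _ v) qfD qf_scalar qfZ.
have hr : d * qf H v \is Num.real by rewrite realM // qf_real.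
have h1 : - (d * qf H v) <= `|d * qf H v|.
  by rewrite real_ler_normr // lexx orbT.
have h2 : `|d * qf H v| <= a * qf 1%:M v.
  rewrite normrM; apply: le_trans (_ : `|d| * (msum H * qf 1%:M v) <= _).
    by apply: ler_wpM2l => //; exact: qf_bound.
  by rewrite mulrA; apply: ler_wpM2r => //; exact: qf1_ge0.
rewrite -[d * _]opprK subr_ge0; exact: le_trans h1 h2.
Qed.

Lemma tr_herm_real A B : herm A -> herm B -> \tr (A *m B) \is Num.real.
Proof.
move=> hA hB; apply/CrealP; rewrite /mxtrace rmorph_sum.
under eq_bigr => i _ do rewrite mxE rmorph_sum.
rewrite exchange_big /=; apply: eq_bigr => i _; rewrite mxE.
by apply: eq_big => // j _ /=; rewrite rmorphM /= -hA -hB mulrC.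
Qed.


Lemma tr_sq_pos A : herm A -> A != 0 -> 0 < \tr (A *m A).
Proof.
move=> hA nA.
have E : \tr (A *m A) = \sum_i \sum_j `|A i j| ^+ 2.
  rewrite /mxtrace; apply: eq_bigr => i _; rewrite mxE.
  by apply: eq_bigr => j _; rewrite normCK -hA.
have ge : forall i, 0 <= \sum_j `|A i j| ^+ 2.
  by move=> i; apply: sumr_ge0 => j _; exact: exprn_ge0.
rewrite E lt_def sumr_ge0 ?andbT; last by move=> i _; exact: ge.
apply/eqP => /psumr_eq0P h; move/eqP: nA; apply; apply/matrixP => i j.
have /psumr_eq0P h2 := h (fun i _ => ge i) i isT.
have := h2 (fun j _ => exprn_ge0 2 (normr_ge0 (A i j))) j isT.
by move/eqP; rewrite sqrf_eq0 normr_eq0 mxE => /eqP.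
Qed.

End Aux.

Lemma ge0_C (R : rcfType) (z : R[i]) : 0 <= z -> z = (complex.Re z)%:C.
Proof. by case: z => x y; rewrite lecE /= => /andP[/eqP -> _]. Qed.

Lemma alpha_ne (R : realType) (S : set R) y b : S y -> y < b -> 0 < b -> inf S <> b.
Proof.
move=> Sy yb b0; case: (pselect (has_lbound S)) => h.
  by move=> e; have := ge_inf h Sy; rewrite e leNgt yb.
by rewrite inf_out => [e|[]//]; rewrite e ltxx in b0.
Qed.

Lemma alpha_eq (R : realType) (S : set R) b : S b -> lbound S b -> inf S = b.
Proof.
move=> Sb lb; apply/eqP; rewrite eq_le; apply/andP; split.
  by apply: ge_inf => //; exists b.
by apply: lb_le_inf => //; exists b.
Qed.

Lemma msum_ge0 (R : realType) n (H : 'M[R[i]]_n) : 0 <= msum H.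
Proof. by apply: sumr_ge0 => j _; apply: sumr_ge0 => i _. Qed.

Lemma herm0 (R : realType) n : herm (0 : 'M[R[i]]_n).
Proof. by move=> i j; rewrite !mxE rmorph0. Qed.

Lemma psd_scalar (R : realType) n (a : R[i]) : 0 <= a -> @psdmx R n a%:M.
Proof.
move=> a0; have := psd_comb (@herm0 R n) a0 (real0 _).
by rewrite scale0r addr0; apply; rewrite normr0 mul0r.
Qed.

Theorem lemmaS1 (R : realType) (n : nat) (eps : R) (rho X : 'M[R[i]]_n) :
  0 < eps < 1 ->
  density rho ->
  X \is hermsymmx ->
  \tr X = 1 ->
  (Dmin eps rho X = ((- ln (1 - eps))%:E)%E <-> rho = X).
Proof.
move=> /andP[e0 e1] [[/hermP hrho rhoPsd] trrho] /hermP hX trX.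
set e : R[i] := eps%:C.
set a : R[i] := (1 - eps)%:C.
have ae : 1 - a = e by rewrite /a rmorphB rmorph1 /= opprB addrC subrK.
have a0 : 0 <= a by rewrite /a ler0c subr_ge0 ltW.
have e0' : 0 <= e by rewrite /e ler0c ltW.
have Mae : 1%:M - a%:M = e%:M :> 'M[R[i]]_n by rewrite -raddfB /= ae.
split; last first.
  move=> <-; rewrite /Dmin.
  have -> : Dmin_alpha eps rho rho = 1 - eps.
    apply: alpha_eq.
      exists (a%:M).
        split; rewrite /loewner_le ?subr0 ?Mae; try exact: psd_scalar.
        by rewrite mul_mx_scalar mxtraceZ trrho mulr1.
      by rewrite mul_scalar_mx mxtraceZ trrho mulr1.
    move=> y [E [_ _ ftr] <-].
    move: ftr; rewrite mulmxBr mulmx1 linearB /= trrho (mxtrace_mulC rho E).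
    have ReB : forall z : R[i], complex.Re (1 - z) = 1 - complex.Re z by case.
    rewrite lecE => /andP[_] /=; rewrite ReB; lra.
  by rewrite subr_gt0 e1.
move=> hD; apply/eqP; apply: contraT => neq; exfalso.
set D := rho - X.
have hD' : herm D by apply: herm_D => //; exact: herm_N.
have Dn0 : D != 0 by rewrite subr_eq0.
set c := \tr (rho *m D).
have creal : c \is Num.real by exact: tr_herm_real.
set H := D - c%:M.
have hH : herm H by apply: herm_D => //; apply: herm_N; exact: herm_scalar.
set t := \tr (D *m D).
have t0 : 0 < t by exact: tr_sq_pos.
set Mr := complex.Re (msum H).
have Mr0 : 0 <= Mr by move: (msum_ge0 H); rewrite lecE => /andP[_].
have MrE : msum H = Mr%:C by apply: ge0_C; exact: msum_ge0.
set dr := eps * (1 - eps) / (Mr + 1).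
have dr0 : 0 < dr by apply: divr_gt0; [apply: mulr_gt0; lra | lra].
have q1 : Mr / (Mr + 1) <= 1 by rewrite ler_pdivrMr; lra.
have q0 : 0 <= Mr / (Mr + 1) by apply: divr_ge0; lra.
have key : eps * (1 - eps) * (Mr / (Mr + 1)) <= eps * (1 - eps).
  by apply: ler_piMr => //; apply: mulr_ge0; lra.
have k1 : eps * (1 - eps) <= 1 - eps by nra.
have k2 : eps * (1 - eps) <= eps by nra.
have drM : dr * Mr = eps * (1 - eps) * (Mr / (Mr + 1)) by rewrite /dr mulrAC -mulrA.
set d : R[i] := dr%:C.
have dreal : d \is Num.real by rewrite /d; apply: ger0_real; rewrite ler0c ltW.
have nd : `|d| * msum H = (dr * Mr)%:C.
  by rewrite ger0_norm ?ler0c ?ltW // MrE -rmorphM.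
set E := a%:M + d *: H.
have fE : feasible_test eps rho E.
  split.
  - rewrite /loewner_le subr0; apply: psd_comb => //.
    by rewrite nd lecR drM; apply: le_trans key k1.
  - rewrite /loewner_le; have -> : 1%:M - E = e%:M + (- d) *: H.
      by rewrite /E opprD addrA Mae scaleNr.
    apply: psd_comb => //; first by rewrite realN.
    by rewrite normrN nd lecR drM; apply: le_trans key k2.
  - have -> : 1%:M - E = e%:M + (- d) *: H.
      by rewrite /E opprD addrA Mae scaleNr.
    rewrite mulmxDr mul_mx_scalar -scalemxAr mxtraceD !mxtraceZ trrho mulr1.
    rewrite /H mulmxBr mul_mx_scalar linearB /= mxtraceZ trrho mulr1 -/c subrr.
    by rewrite mulr0 addr0.
have trE : \tr (E *m X) = a - d * t.
  rewrite /E mulmxDl mul_scalar_mx -scalemxAl mxtraceD !mxtraceZ trX mulr1.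
  rewrite /H mulmxBl mul_scalar_mx linearB /= mxtraceZ trX mulr1.
  rewrite /c (mxtrace_mulC rho D) -linearB /= -mulmxBr.
  have -> : X - rho = - D by rewrite /D opprB.
  by rewrite mulmxN linearN /= mulrN.
have ltE : complex.Re (\tr (E *m X)) < 1 - eps.
  have : \tr (E *m X) < a by rewrite trE ltrBlDr ltrDl; apply: mulr_gt0 => //; rewrite ltcR.
  by rewrite ltcE => /andP[_].
have ne : Dmin_alpha eps rho X <> 1 - eps.
  apply: (alpha_ne (y := complex.Re (\tr (E *m X)))) => //; last lra.
  by exists E.
move: hD; rewrite /Dmin; case: ifP => // apos [].
move/oppr_inj => h; apply: ne; apply: ln_inj h.
  by rewrite ?inE posrE.
by rewrite ?inE posrE subr_gt0.
Qed.
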